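(* For every $e\in\mathrm{Exp}$, $$e\equiv \mathrm{GS}_{\alpha\in\mathrm{At}}\Big(\bigoplus_{d\in\mathrm{supp}(\partial(e)_\alpha)}\partial(e)_\alpha(d)\cdot\exp(d)\Big),$$ where $\exp:\{\mathsf{acc},\mathsf{rej}\}+\mathrm{Out}+\mathrm{Act}\times\mathrm{Exp}\to\mathrm{Exp}$ is given by $\exp(\mathsf{rej})=\mathtt 0$, $\exp(\mathsf{acc})=\mathtt 1$, $\exp(v)=v$ for $v\in\mathrm{Out}$, and $\exp(p,f)=p;f$.
   Context: Fix a finite set $T$ of primitive tests, a set $\mathrm{Act}$ of atomic actions, a set $\mathrm{Out}$ of return values, and a semiring $(S,+,\cdot,0,1)$ that is positive ($x+y=0\Rightarrow x=y=0$), refinement (whenever $x+y=z+w$ there exist $s,t,u,v$ with $s+t=x$, $s+u=z$, $u+v=y$, $t+v=w$) and Conway (with ${}^*:S\to S$ satisfying $(a+b)^*=a^*(ba^* )^*$, $(ab)^*=1+a(ba)^*b$). Tests: $b,c\in\mathrm{BExp}::=\mathtt{0}\mid\mathtt{1}\mid t\ (t\in T)\mid\bar b\mid b+c\mid bc$ ($\mathtt 0,\mathtt 1$ false/true, distinct from semiring $0,1$); $\equiv_{BA}$ is Boolean equivalence; $\mathrm{At}$ is the finite set of atoms of the free Boolean algebra on $T$, atoms also regarded as tests; $\alpha\le b$ means $\alpha$ entails $b$. Expressions: $e,f\in\mathrm{Exp}::= p\in\mathrm{Act}\mid b\in\mathrm{BExp}\mid e+_b f\mid e;f\mid e^{(b)}\mid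 v\in\mathrm{Out}\mid e\oplus_{r,s} f\ (r,s\in S)$; $\odot r:=\mathtt 1\oplus_{r,0}\mathtt 0$. $\mathcal M_\omega(X)$: finitely supported maps $X\to S$, pointwise operations; $\delta_x$ indicator of $x$; $\mathrm{supp}(\nu)=\{x:\nu(x)\neq0\}$. The derivative $\partial:\mathrm{Exp}\to\mathcal M_\omega(\{\mathsf{acc},\mathsf{rej}\}+\mathrm{Out}+\mathrm{Act}\times\mathrm{Exp})^{\mathrm{At}}$: $\partial(b)_\alpha=\delta_{\mathsf{acc}}$ if $\alpha\le b$, else $\delta_{\mathsf{rej}}$; $\partial(v)_\alpha=\delta_v$; $\partial(p)_\alpha=\delta_{(p,\mathtt 1)}$; $\partial(e+_bf)_\alpha=\partial(e)_\alpha$ if $\alpha\le b$, else $\partial(f)_\alpha$; $\partial(e\oplus_{r,s}f)_\alpha=r\partial(e)_\alpha+s\partial(f)_\alpha$; $\partial(e;f)_\alpha=\sum_x\partial(e)_\alpha(x)c_{\alpha,f}(x)$ with $c_{\alpha,f}(\mathsf{acc})=\partial(f)_\alpha$, $c_{\alpha,f}(x)=\delta_x$ for $x\in\{\mathsf{rej}\}\cup\mathrm{Out}$, $c_{\alpha,f}(p,e')=\delta_{(p,e';f)}$; $\partial(e^{(b)})_\alpha(x)$ is $1$ if $x=\mathsf{acc}$ and $\alpha\le\bar b$; $\partial(e)_\alpha(\mathsf{acc})^*\partial(e)_\alpha(x)$ if $x\in\{\mathsf{rej}\}\cup\mathrm{Out}$ and $\alpha\le b$; $\partial(e)_\alpha(\mathsf{acc})^*\partial(e)_\alpha(p,e')$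 if $x=(p,e';e^{(b)})$ and $\alpha\le b$; $0$ otherwise. Generalized guarded sum over $\Phi\subseteq\mathrm{At}$: $\mathrm{GS}_{\alpha\in\emptyset}e_\alpha:=\mathtt 0$ and $\mathrm{GS}_{\alpha\in\Phi}e_\alpha:=e_\gamma+_\gamma\mathrm{GS}_{\alpha\in\Phi\setminus\{\gamma\}}e_\alpha$ for some $\gamma\in\Phi$. Generalized weighted sum: $\bigoplus_{i\in I}r_i\cdot e_i:=e_j\oplus_{r_j,1}\big(\bigoplus_{i\in I\setminus\{j\}}r_i\cdot e_i\big)$ for some $j\in I$, the empty weighted sum being $\odot0$. Both are well defined up to $\equiv$. $E:\mathrm{Exp}\to S^{\mathrm{At}}$: $E(p)_\alpha=E(v)_\alpha=0$; $E(b)_\alpha=1$ if $\alpha\le b$ else $0$; $E(e\oplus_{r,s}f)_\alpha=rE(e)_\alpha+sE(f)_\alpha$; $E(e+_bf)_\alpha=E(e)_\alpha$ if $\alpha\le b$ else $E(f)_\alpha$; $E(e;f)_\alpha=E(e)_\alpha E(f)_\alpha$; $E(e^{(b)})_\alpha=E(\bar b)_\alpha$. The relation $\equiv$ is the smallest congruence on $\mathrm{Exp}$ (tests taken up to $\equiv_{BA}$; sequencing binds tighter than $\oplus$, $\odot$ binds tightest) containing, for all $e,f,g\in\mathrm{Exp}$, tests $b,c$, $v\in\mathrm{Out}$, $r,s,t,u\in S$: (G1) $e+_be\equiv e$; (G2) $e+_bf\equiv b;e+_bf$; (G3) $e+_bf\equiv f+_{\bar b}e$; (G4) $(e+_bf)+_cg\equiv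 e+_{bc}(f+_cg)$; (D1) $e\oplus_{r,s}(f+_bg)\equiv(e\oplus_{r,s}f)+_b(e\oplus_{r,s}g)$; (D2) $e\oplus_{r,s}(f\oplus_{t,u}g)\equiv e\oplus_{r,1}(f\oplus_{st,su}g)$; (D3) $b;(e\oplus_{r,s}f)\equiv b;(b;e\oplus_{r,s}b;f)$; (S1) $\mathtt 1;e\equiv e\equiv e;\mathtt 1$; (S2) $(e;f);g\equiv e;(f;g)$; (S3) $\mathtt 0;e\equiv\mathtt 0$; (S4) $(e\oplus_{r,s}f);g\equiv e;g\oplus_{r,s}f;g$; (S5) $(e+_bf);g\equiv e;g+_bf;g$; (S6) $v;e\equiv v$; (S7) $b;c\equiv bc$; (L1) $e^{(b)}\equiv e;e^{(b)}+_b\mathtt 1$; (C1) $\odot1\equiv\mathtt 1$; (C2) $\odot0;e\equiv\odot0$; (W1) $e\oplus_{r,s}e\equiv\odot(r+s);e$; (W2) $e\oplus_{r,s}f\equiv f\oplus_{s,r}e$; (W3) $e\oplus_{r,s}(f\oplus_{t,u}g)\equiv(e\oplus_{r,st}f)\oplus_{1,su}g$; (W4) $e\oplus_{ru,s}f\equiv(\odot u;e)\oplus_{r,s}f$; and closed under the rules (L2) if $e\equiv(f\oplus_{r,s}\mathtt 1)+_cg$ then $c;e^{(b)}\equiv c;((\odot(s^*r);f;e^{(b)})+_b\mathtt 1)$; (F1) if $g\equiv e;g+_bf$ and $E(e)_\alpha=0$ for all $\alpha\in\mathrm{At}$ then $g\equiv e^{(b)};f$. *)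

(* Defs.v *)
From HB Require Import structures.
From mathcomp Require Import all_boot all_order all_algebra.
Set Implicit Arguments. Unset Strict Implicit. Unset Printing Implicit Defensive.
Import GRing.Theory.
Local Open Scope ring_scope.

Section Tests.
Variable T : finType.

Inductive BExp : Type :=
| BFalse | BTrue | BPrim of T | BNeg of BExp | BOr of BExp & BExp | BAnd of BExp & BExp.

Fixpoint bexp_eqb (b c : BExp) : bool :=
  match b, c with
  | BFalse, BFalse => true
  | BTrue, BTrue => true
  | BPrim t, BPrim t' => t == t'
  | BNeg b, BNeg c => bexp_eqb b c
  | BOr b1 b2, BOr c1 c2 => bexp_eqb b1 c1 && bexp_eqb b2 c2
  | BAnd b1 b2, BAnd c1 c2 => bexp_eqb b1 c1 && bexp_eqb b2 c2
  | _, _ => false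
  end.

Lemma bexp_eqP : Equality.axiom bexp_eqb.
Proof.
elim=> [||t|b IH|b1 IH1 b2 IH2|b1 IH1 b2 IH2] [||t'|c|c1 c2|c1 c2] /=;
  try by constructor.
- by apply: (iffP eqP) => [->|[]].
- by apply: (iffP (IH c)) => [->|[]].
- apply: (iffP andP) => [[/IH1 -> /IH2 ->]//|[<- <-]].
  by split; [apply/IH1|apply/IH2].
- apply: (iffP andP) => [[/IH1 -> /IH2 ->]//|[<- <-]].
  by split; [apply/IH1|apply/IH2].
Qed.

HB.instance Definition _ := hasDecEq.Build BExp bexp_eqP.

(* Atoms of the free Boolean algebra on T = valuations of the primitive tests. *)
Definition atom := {ffun T -> bool}.

Fixpoint beval (b : BExp) (a : atom) : bool :=
  match b with
  | BFalse => false
  | BTrue => true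
  | BPrim t => a t
  | BNeg b => ~~ beval b a
  | BOr b c => beval b a || beval c a
  | BAnd b c => beval b a && beval c a
  end.

Definition atom_le (a : atom) (b : BExp) : bool := beval b a.

Definition BA_equiv (b c : BExp) : Prop := forall a : atom, beval b a = beval c a.

Definition atom_test (a : atom) : BExp :=
  foldr (fun t acc => BAnd (if a t then BPrim t else BNeg (BPrim t)) acc) BTrue (enum T).

End Tests.

Section Exprs.
Variables (T : finType) (Act Out : eqType) (S : pzSemiRingType).

(* Exp ::= p | b | e +_b f | e;f | e^(b) | v | e (+)_{r,s} f *)
Inductive Exp : Type :=
| EAct of Act
| ETest of BExp T
| EGuard of Exp & BExp T & Exp
| ESeq of Exp & Exp
| ELoop of Exp & BExp T
| ERet of Out
| EWsum of Exp & S & S & Exp.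

Fixpoint exp_eqb (e f : Exp) : bool :=
  match e, f with
  | EAct p, EAct q => p == q
  | ETest b, ETest c => b == c
  | EGuard e1 b e2, EGuard f1 c f2 => [&& exp_eqb e1 f1, b == c & exp_eqb e2 f2]
  | ESeq e1 e2, ESeq f1 f2 => exp_eqb e1 f1 && exp_eqb e2 f2
  | ELoop e1 b, ELoop f1 c => exp_eqb e1 f1 && (b == c)
  | ERet v, ERet w => v == w
  | EWsum e1 r s e2, EWsum f1 r' s' f2 =>
      [&& exp_eqb e1 f1, r == r', s == s' & exp_eqb e2 f2]
  | _, _ => false
  end.

Lemma exp_eqP : Equality.axiom exp_eqb.
Proof.
elim=> [p|b|e1 IH1 b e2 IH2|e1 IH1 e2 IH2|e1 IH1 b|v|e1 IH1 r s e2 IH2]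
  [q|c|f1 c f2|f1 f2|f1 c|w|f1 r' s' f2] /=; try by constructor.
- by apply: (iffP eqP) => [->|[]].
- by apply: (iffP eqP) => [->|[]].
- apply: (iffP and3P) => [[/IH1 -> /eqP -> /IH2 ->]//|[<- <- <-]].
  by split; [apply/IH1| |apply/IH2].
- apply: (iffP andP) => [[/IH1 -> /IH2 ->]//|[<- <-]].
  by split; [apply/IH1|apply/IH2].
- apply: (iffP andP) => [[/IH1 -> /eqP ->]//|[<- <-]].
  by split; [apply/IH1|].
- by apply: (iffP eqP) => [->|[]].
- apply: (iffP and4P) => [[/IH1 -> /eqP -> /eqP -> /IH2 ->]//|[<- <- <- <-]].
  by split; [apply/IH1| | |apply/IH2].
Qed.

HB.instance Definition _ := hasDecEq.Build Exp exp_eqP.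

Inductive Deriv : Type :=
| Acc | Rej | DOut of Out | DAct of Act & Exp.

Definition deriv_eqb (x y : Deriv) : bool :=
  match x, y with
  | Acc, Acc => true
  | Rej, Rej => true
  | DOut v, DOut w => v == w
  | DAct p e, DAct q f => (p == q) && (e == f)
  | _, _ => false
  end.

Lemma deriv_eqP : Equality.axiom deriv_eqb.
Proof.
case=> [||v|p e] [||w|q f] /=; try by constructor.
- by apply: (iffP eqP) => [->|[]].
- by apply: (iffP andP) => [[/eqP -> /eqP ->]|[-> ->]].
Qed.

HB.instance Definition _ := hasDecEq.Build Deriv deriv_eqP.

(* Finitely supported maps Deriv -> S are represented by formal finite sums
   (lists of (point, weight) pairs); [mval m] is the map they denote. *)
Definition meas := seq (Deriv * S).
Definition mval (m : meas) (x : Deriv) : S := \sum_(p <- m | p.1 == x) p.2.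
Definition mscale (r : S) (m : meas) : meas := [seq (p.1, r * p.2) | p <- m].
Definition supp (m : meas) (x : Deriv) : bool := mval m x != 0.

Variable star : S -> S.

Fixpoint derivative (e : Exp) (a : atom T) : meas :=
  match e with
  | ETest b => if atom_le a b then [:: (Acc, 1)] else [:: (Rej, 1)]
  | ERet v => [:: (DOut v, 1)]
  | EAct p => [:: (DAct p (ETest (BTrue T)), 1)]
  | EGuard e1 b e2 => if atom_le a b then derivative e1 a else derivative e2 a
  | EWsum e1 r s e2 => mscale r (derivative e1 a) ++ mscale s (derivative e2 a)
  | ESeq e1 e2 =>
      flatten [seq match p.1 with
                   | Acc => mscale p.2 (derivative e2 a)
                   | DAct q e' => [:: (DAct q (ESeq e' e2), p.2)]
                   | x => [:: (x, p.2)]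
                   end | p <- derivative e1 a]
  | ELoop e1 b =>
      if atom_le a (BNeg b) then [:: (Acc, 1)]
      else
        let m := derivative e1 a in
        flatten [seq match p.1 with
                     | Acc => [::]
                     | DAct q e' => [:: (DAct q (ESeq e' (ELoop e1 b)), star (mval m Acc) * p.2)]
                     | x => [:: (x, star (mval m Acc) * p.2)]
                     end | p <- m]
  end.

Fixpoint Eps (e : Exp) (a : atom T) : S :=
  match e with
  | EAct _ => 0
  | ERet _ => 0
  | ETest b => if atom_le a b then 1 else 0
  | EWsum e1 r s e2 => r * Eps e1 a + s * Eps e2 a
  | EGuard e1 b e2 => if atom_le a b then Eps e1 a else Eps e2 a
  | ESeq e1 e2 => Eps e1 a * Eps e2 a
  | ELoop e1 b => if atom_le a (BNeg b) then 1 else 0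
  end.

Definition odot (r : S) : Exp := EWsum (ETest (BTrue T)) r 0 (ETest (BFalse T)).

Fixpoint GS (l : seq (atom T)) (F : atom T -> Exp) : Exp :=
  match l with
  | [::] => ETest (BFalse T)
  | g :: l' => EGuard (F g) (atom_test g) (GS l' F)
  end.

Fixpoint WS (l : seq (S * Exp)) : Exp :=
  match l with
  | [::] => odot 0
  | (r, e) :: l' => EWsum e r 1 (WS l')
  end.

Definition expd (x : Deriv) : Exp :=
  match x with
  | Acc => ETest (BTrue T)
  | Rej => ETest (BFalse T)
  | DOut v => ERet v
  | DAct p f => ESeq (EAct p) f
  end.

Inductive gequiv : Exp -> Exp -> Prop :=
| eq_refl e : gequiv e e
| eq_sym e f : gequiv e f -> gequiv f e
| eq_trans e f g : gequiv e f -> gequiv f g -> gequiv e g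
| eq_test b c : BA_equiv b c -> gequiv (ETest b) (ETest c)
| eq_guard e e' b b' f f' : gequiv e e' -> BA_equiv b b' -> gequiv f f' ->
    gequiv (EGuard e b f) (EGuard e' b' f')
| eq_seq e e' f f' : gequiv e e' -> gequiv f f' -> gequiv (ESeq e f) (ESeq e' f')
| eq_loop e e' b b' : gequiv e e' -> BA_equiv b b' -> gequiv (ELoop e b) (ELoop e' b')
| eq_wsum e e' r s f f' : gequiv e e' -> gequiv f f' ->
    gequiv (EWsum e r s f) (EWsum e' r s f')
| ax_G1 e b : gequiv (EGuard e b e) e
| ax_G2 e b f : gequiv (EGuard e b f) (EGuard (ESeq (ETest b) e) b f)
| ax_G3 e b f : gequiv (EGuard e b f) (EGuard f (BNeg b) e)
| ax_G4 e f g b c : gequiv (EGuard (EGuard e b f) c g) (EGuard e (BAnd b c) (EGuard f c g))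
| ax_D1 e f g b r s :
    gequiv (EWsum e r s (EGuard f b g)) (EGuard (EWsum e r s f) b (EWsum e r s g))
| ax_D2 e f g r s t u :
    gequiv (EWsum e r s (EWsum f t u g)) (EWsum e r 1 (EWsum f (s * t) (s * u) g))
| ax_D3 b e f r s :
    gequiv (ESeq (ETest b) (EWsum e r s f))
          (ESeq (ETest b) (EWsum (ESeq (ETest b) e) r s (ESeq (ETest b) f)))
| ax_S1l e : gequiv (ESeq (ETest (BTrue T)) e) e
| ax_S1r e : gequiv e (ESeq e (ETest (BTrue T)))
| ax_S2 e f g : gequiv (ESeq (ESeq e f) g) (ESeq e (ESeq f g))
| ax_S3 e : gequiv (ESeq (ETest (BFalse T)) e) (ETest (BFalse T))
| ax_S4 e f g r s : gequiv (ESeq (EWsum e r s f) g) (EWsum (ESeq e g) r s (ESeq f g))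
| ax_S5 e f g b : gequiv (ESeq (EGuard e b f) g) (EGuard (ESeq e g) b (ESeq f g))
| ax_S6 v e : gequiv (ESeq (ERet v) e) (ERet v)
| ax_S7 b c : gequiv (ESeq (ETest b) (ETest c)) (ETest (BAnd b c))
| ax_L1 e b : gequiv (ELoop e b) (EGuard (ESeq e (ELoop e b)) b (ETest (BTrue T)))
| ax_C1 : gequiv (odot 1) (ETest (BTrue T))
| ax_C2 e : gequiv (ESeq (odot 0) e) (odot 0)
| ax_W1 e r s : gequiv (EWsum e r s e) (ESeq (odot (r + s)) e)
| ax_W2 e f r s : gequiv (EWsum e r s f) (EWsum f s r e)
| ax_W3 e f g r s t u :
    gequiv (EWsum e r s (EWsum f t u g)) (EWsum (EWsum e r (s * t) f) 1 (s * u) g)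
| ax_W4 e f r s u : gequiv (EWsum e (r * u) s f) (EWsum (ESeq (odot u) e) r s f)
| rule_L2 e f g b c r s :
    gequiv e (EGuard (EWsum f r s (ETest (BTrue T))) c g) ->
    gequiv (ESeq (ETest c) (ELoop e b))
          (ESeq (ETest c) (EGuard (ESeq (odot (star s * r)) (ESeq f (ELoop e b)))
                                  b (ETest (BTrue T))))
| rule_F1 e f g b :
    gequiv g (EGuard (ESeq e g) b f) -> (forall a : atom T, Eps e a = 0) ->
    gequiv g (ESeq (ELoop e b) f).

End Exprs.

(* Main.v *)
Require Import Defs.
From HB Require Import structures.
From mathcomp Require Import all_boot all_order all_algebra.
Set Implicit Arguments. Unset Strict Implicit. Unset Printing Implicit Defensive.
Import GRing.Theory.
Local Open Scope ring_scope.

Section Proofs.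
Variables (T : finType) (Act Out : eqType) (S : pzSemiRingType) (star : S -> S).
Local Notation Exp := (Exp T Act Out S).
Local Notation "e === f" := (gequiv star e f) (at level 70).
Local Notation tst b := (@ETest T Act Out S b).
Local Notation one := (tst (BTrue T)).
Local Notation zero := (tst (BFalse T)).
Local Notation od := (@odot T Act Out S).

Lemma gR (e : Exp) : e === e. Proof. exact: Defs.eq_refl. Qed.
Lemma gS (e f : Exp) : e === f -> f === e. Proof. exact: Defs.eq_sym. Qed.
Lemma gT (f e g : Exp) : e === f -> f === g -> e === g. Proof. exact: Defs.eq_trans. Qed.
Lemma BAr (b : BExp T) : BA_equiv b b. Proof. by []. Qed.
Arguments gT f {e g}.
Hint Resolve gR BAr : core.
Lemma aS7 b c : ESeq (tst b) (tst c) === tst (BAnd b c). Proof. exact: ax_S7. Qed.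
Lemma aTest b c : BA_equiv b c -> tst b === tst c. Proof. exact: eq_test. Qed.
Lemma aC1 : od 1 === one. Proof. exact: ax_C1. Qed.

Lemma seqL (d : Exp) x y : x === y -> ESeq d x === ESeq d y.
Proof. by move=> H; apply: eq_seq. Qed.

Lemma L_g0 (x y : Exp) : EGuard x (BFalse T) y === y.
Proof.
apply: (gT _ (ax_G2 _ _ _ _)).
apply: (gT _ (eq_guard (ax_S3 _ x) (BAr _) (gR y))).
apply: (gT _ (eq_guard (gS (ax_S3 _ y)) (BAr _) (gR y))).
apply: (gT _ (gS (ax_G2 _ _ _ _))); exact: ax_G1.
Qed.

Lemma L_g1 (x y : Exp) : EGuard x (BTrue T) y === x.
Proof.
apply: (gT _ (ax_G3 _ _ _ _)).
apply: (gT (EGuard y (BFalse T) x)); last exact: L_g0.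
by apply: eq_guard.
Qed.

Lemma L_test (d : BExp T) : tst d === EGuard one d zero.
Proof.
apply: gS.
apply: (gT _ (ax_G2 _ _ _ _)).
apply: (gT (EGuard (tst d) d zero)).
  by apply: eq_guard => //; apply: gS; apply: ax_S1r.
apply: (gT _ (ax_G3 _ _ _ _)).
apply: (gT _ (ax_G2 _ _ _ _)).
apply: (gT (EGuard zero (BNeg d) (tst d))).
  apply: eq_guard => //; apply: (gT _ (aS7 _ _)).
  by apply: aTest => a /=; rewrite ?andbF ?andNb ?andbN.
apply: gS.
apply: (gT _ (gS (ax_G1 _ (tst d) (BNeg d)))).
apply: (gT _ (ax_G2 _ _ _ _)).
apply: eq_guard => //; apply: (gT _ (aS7 _ _)).
by apply: aTest => a /=; rewrite ?andbF ?andNb ?andbN.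
Qed.

Lemma L_tctx (d : BExp T) (X : Exp) : ESeq (tst d) X === EGuard X d zero.
Proof.
apply: (gT _ (eq_seq (L_test d) (gR X))).
apply: (gT _ (ax_S5 _ _ _ _ _)).
by apply: eq_guard => //; [apply: ax_S1l | apply: ax_S3].
Qed.

Lemma ctx_guard (d b b' : BExp T) (x y : Exp) :
  (forall a, beval d a -> beval b a = beval b' a) ->
  ESeq (tst d) (EGuard x b y) === ESeq (tst d) (EGuard x b' y).
Proof.
move=> H.
apply: (gT _ (L_tctx _ _)); apply: gS; apply: (gT _ (L_tctx _ _)).
apply: (gT _ (ax_G4 _ _ _ _ _ _)); apply: gS; apply: (gT _ (ax_G4 _ _ _ _ _ _)).
apply: eq_guard => // a /=.
by case E: (beval d a); rewrite ?andbF ?andbT // H.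
Qed.

Lemma guard_left (d b : BExp T) (x y : Exp) :
  (forall a, beval d a -> beval b a) ->
  ESeq (tst d) (EGuard x b y) === ESeq (tst d) x.
Proof.
move=> H; apply: (gT (ESeq (tst d) (EGuard x (BTrue T) y))).
  by apply: ctx_guard => a /H ->.
by apply: seqL; apply: L_g1.
Qed.

Lemma guard_right (d b : BExp T) (x y : Exp) :
  (forall a, beval d a -> ~~ beval b a) ->
  ESeq (tst d) (EGuard x b y) === ESeq (tst d) y.
Proof.
move=> H; apply: (gT (ESeq (tst d) (EGuard x (BFalse T) y))).
  by apply: ctx_guard => a /H /negbTE ->.
by apply: seqL; apply: L_g0.
Qed.

Lemma left_branch (b : BExp T) (x x' y : Exp) :
  ESeq (tst b) x === ESeq (tst b) x' -> EGuard x b y === EGuard x' b y.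
Proof.
move=> H; apply: (gT _ (ax_G2 _ _ _ _)); apply: gS; apply: (gT _ (ax_G2 _ _ _ _)).
by apply: eq_guard => //; apply: gS.
Qed.

Lemma right_branch (b : BExp T) (x y y' : Exp) :
  ESeq (tst (BNeg b)) y === ESeq (tst (BNeg b)) y' -> EGuard x b y === EGuard x b y'.
Proof.
move=> H; apply: (gT _ (ax_G3 _ _ _ _)); apply: gS; apply: (gT _ (ax_G3 _ _ _ _)).
by apply: left_branch; apply: gS.
Qed.

Lemma sum_ctx (b c : BExp T) (X : Exp) :
  ESeq (tst (BOr b c)) X === EGuard X b (ESeq (tst c) X).
Proof.
apply: (gT _ (L_tctx _ _)).
apply: (gT (EGuard (EGuard X b X) (BOr b c) zero)).
  by apply: eq_guard => //; apply: gS; apply: ax_G1.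
apply: (gT _ (ax_G4 _ _ _ _ _ _)).
apply: (gT (EGuard X b (EGuard X (BOr b c) zero))).
  by apply: eq_guard => // a /=; case: (beval b a).
apply: right_branch.
apply: (gT (ESeq (tst (BNeg b)) (EGuard X c zero))).
  by apply: ctx_guard => a /= /negbTE ->.
by apply: seqL; apply: gS; apply: L_tctx.
Qed.


Lemma atom_testE (g a : atom T) : beval (atom_test g) a = (a == g).
Proof.
rewrite /atom_test.
have E : forall l, beval (foldr (fun t acc => BAnd (if g t then BPrim t else BNeg (BPrim t)) acc) (BTrue T) l) a = all (fun t => a t == g t) l.
  elim=> [//|t l IH]; rewrite /= IH.
  by case: (g t) => /=; case: (a t).
rewrite E.
apply/idP/idP.
  move/allP => H; apply/eqP/ffunP => t; apply/eqP; apply: H; by rewrite mem_enum.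
by move/eqP => ->; apply/allP => t _.
Qed.

Local Notation At a := (tst (atom_test a)).

Definition cl (l : seq (atom T)) : BExp T :=
  foldr (fun g acc => BOr (atom_test g) acc) (BFalse T) l.

Lemma clE l a : beval (cl l) a = (a \in l).
Proof. by elim: l => //= g l ->; rewrite atom_testE in_cons. Qed.

Lemma pointwise (e e' : Exp) :
  (forall a, ESeq (At a) e === ESeq (At a) e') -> e === e'.
Proof.
move=> H.
have Hl : forall l, ESeq (tst (cl l)) e === ESeq (tst (cl l)) e'.
  elim=> [|g l IH] /=.
    by apply: (gT _ (ax_S3 _ _)); apply: gS; apply: ax_S3.
  apply: (gT _ (sum_ctx _ _ _)); apply: gS; apply: (gT _ (sum_ctx _ _ _)); apply: gS.
  apply: (gT (EGuard e' (atom_test g) (ESeq (tst (cl l)) e))).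
    exact: left_branch.
  by apply: eq_guard.
apply: (gT _ (gS (ax_S1l _ _))); apply: gS; apply: (gT _ (gS (ax_S1l _ _))); apply: gS.
apply: (gT (ESeq (tst (cl (enum (atom T)))) e)).
  by apply: eq_seq => //; apply: aTest => a; rewrite clE mem_enum.
apply: (gT _ (Hl _)).
by apply: eq_seq => //; apply: aTest => a; rewrite clE mem_enum.
Qed.

Lemma GS_at (l : seq (atom T)) (F : atom T -> Exp) a :
  a \in l -> ESeq (At a) (GS l F) === ESeq (At a) (F a).
Proof.
elim: l => //= g l IH; rewrite in_cons; case: (eqVneq a g) => [<- _|ne /= al].
  by apply: guard_left => a'; rewrite !atom_testE => /eqP ->.
apply: (gT (ESeq (At a) (GS l F))); last exact: IH.
by apply: guard_right => a'; rewrite !atom_testE => /eqP ->; rewrite ne.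
Qed.

Lemma aW1 (x : Exp) r s : EWsum x r s x === ESeq (od (r + s)) x.
Proof. exact: ax_W1. Qed.

Lemma Z_self (z : Exp) : z === EWsum z 1 0 z.
Proof.
apply: gS; apply: (gT _ (aW1 _ _ _)); rewrite addr0.
apply: (gT (ESeq one z)); last exact: ax_S1l.
by apply: eq_seq => //; apply: aC1.
Qed.

Lemma L_K (y z : Exp) r : EWsum y r 0 z === EWsum y r 1 (od 0).
Proof.
apply: (gT (EWsum y r 0 (EWsum z 1 0 z))).
  by apply: eq_wsum => //; apply: Z_self.
have H := ax_D2 star y z z r 0 1 0; rewrite !mul0r in H.
apply: (gT _ H); apply: eq_wsum => //.
apply: (gT _ (aW1 _ _ _)); rewrite addr0; exact: ax_C2.
Qed.

Lemma L_K1 (y z : Exp) : EWsum y 1 0 z === y.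
Proof.
apply: (gT _ (L_K _ _ _)); apply: gS.
apply: (gT _ (Z_self y)); exact: L_K.
Qed.

Lemma Zdrop (x y : Exp) : EWsum x 0 1 y === y.
Proof. apply: (gT _ (ax_W2 _ _ _ _ _)); exact: L_K1. Qed.

Lemma odseq u (X : Exp) : ESeq (od u) X === EWsum X u 0 zero.
Proof.
apply: (gT _ (ax_S4 _ _ _ _ _ _)).
by apply: eq_wsum; [apply: ax_S1l | apply: ax_S3].
Qed.

Lemma od_scale u (x y : Exp) t v :
  ESeq (od u) (EWsum x t v y) === EWsum x (u * t) (u * v) y.
Proof.
apply: (gT _ (odseq _ _)).
apply: (gT _ (ax_W2 _ _ _ _ _)).
apply: (gT _ (ax_D2 _ _ _ _ _ _ _ _)).
exact: Zdrop.
Qed.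

Lemma WS_single r (x : Exp) : WS [:: (r, x)] === ESeq (od r) x.
Proof.
apply: gS; apply: (gT _ (odseq _ _)); exact: L_K.
Qed.

Lemma WS_one (x : Exp) : WS [:: (1, x)] === x.
Proof.
apply: (gT _ (WS_single _ _)).
apply: (gT (ESeq one x)); last exact: ax_S1l.
by apply: eq_seq => //; apply: aC1.
Qed.

Definition scale (u : S) (l : seq (S * Exp)) := [seq (u * p.1, p.2) | p <- l].

Lemma scale1 l : scale 1 l = l.
Proof. by elim: l => //= [[r x] l] ->; rewrite mul1r. Qed.

Lemma od_WS u l : ESeq (od u) (WS l) === WS (scale u l).
Proof.
elim: l => [|[t x] l IH] /=.
  have H := od_scale u one zero 0 0; rewrite mulr0 in H; exact: H.
apply: (gT _ (od_scale _ _ _ _ _)); rewrite mulr1.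
apply: (gT _ (ax_W2 _ _ _ _ _)).
have H := ax_W4 star (WS l) x 1 (u * t) u; rewrite mul1r in H.
apply: (gT _ H).
apply: (gT _ (ax_W2 _ _ _ _ _)).
by apply: eq_wsum.
Qed.

Lemma od0_wsum r s (X : Exp) : EWsum (od 0) r s X === ESeq (od s) X.
Proof.
apply: (gT (EWsum (ESeq (od 0) X) r s X)).
  by apply: eq_wsum => //; apply: gS; apply: ax_C2.
have H := ax_W4 star X X r s 0; rewrite mulr0 in H.
apply: (gT _ (gS H)).
by apply: (gT _ (aW1 _ _ _)); rewrite add0r.
Qed.

Lemma wassoc (x y z : Exp) t r s :
  EWsum (EWsum x t 1 y) r s z === EWsum x (r * t) 1 (EWsum y r s z).
Proof.
have H := ax_W4 star (EWsum x t 1 y) z 1 s r; rewrite mul1r in H.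
apply: (gT _ H).
apply: (gT (EWsum (EWsum x (r * t) r y) 1 s z)).
  by apply: eq_wsum => //; have H2 := od_scale r x y t 1; rewrite mulr1 in H2.
have H3 := ax_W3 star x y z (r * t) 1 r s; rewrite !mul1r in H3.
exact: gS.
Qed.

Lemma WS_wsum l1 l2 r s :
  EWsum (WS l1) r s (WS l2) === WS (scale r l1 ++ scale s l2).
Proof.
elim: l1 => [|[t x] l1 IH] /=.
  by apply: (gT _ (od0_wsum _ _ _)); apply: od_WS.
apply: (gT _ (wassoc _ _ _ _ _ _)).
by apply: eq_wsum.
Qed.

Lemma WS_cons r L l : WS ((r, WS L) :: l) === WS (scale r L ++ l).
Proof.
rewrite -{2}(scale1 l); exact: WS_wsum.
Qed.

Lemma WS_seq l (g : Exp) : ESeq (WS l) g === WS [seq (p.1, ESeq p.2 g) | p <- l].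
Proof.
elim: l => [|[r x] l IH] /=; first exact: ax_C2.
apply: (gT _ (ax_S4 _ _ _ _ _ _)).
by apply: eq_wsum.
Qed.

Lemma wmerge (x W : Exp) r c :
  EWsum x r 1 (EWsum x c 1 W) === EWsum x (r + c) 1 W.
Proof.
have H := ax_W3 star x x W r 1 c 1; rewrite !mul1r in H.
apply: (gT _ H).
apply: (gT (EWsum (ESeq (od (r + c)) x) 1 1 W)).
  by apply: eq_wsum => //; apply: aW1.
have H2 := ax_W4 star x W 1 1 (r + c); rewrite mul1r in H2.
exact: gS.
Qed.

Lemma wswap (x y W : Exp) r t :
  EWsum x r 1 (EWsum y t 1 W) === EWsum y t 1 (EWsum x r 1 W).
Proof.
have H := ax_W3 star x y W r 1 t 1; rewrite !mul1r in H.
apply: (gT _ H).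
have H2 := ax_W3 star y x W t 1 r 1; rewrite !mul1r in H2.
apply: (gT (EWsum (EWsum y t r x) 1 1 W)); last exact: gS.
by apply: eq_wsum => //; apply: ax_W2.
Qed.

Lemma WS_rem (p : S * Exp) (l : seq (S * Exp)) : p \in l -> WS l === WS (p :: rem p l).
Proof.
elim: l => //= q l IH; rewrite in_cons; case: eqVneq => [-> _|ne /= pl].
  by [].
case: p ne pl IH => r x ne pl IH; case: q ne => t y ne /=.
apply: (gT (EWsum y t 1 (EWsum x r 1 (WS (rem (r, x) l))))).
  by apply: eq_wsum => //; apply: IH.
exact: wswap.
Qed.

Lemma WS_perm (l1 l2 : seq (S * Exp)) : perm_eq l1 l2 -> WS l1 === WS l2.
Proof.
elim: l1 l2 => [|p l1 IH] l2 Hp.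
  by move: (perm_size Hp); case: l2 Hp.
have pl2 : p \in l2 by rewrite -(perm_mem Hp) mem_head.
apply: (gT (WS (p :: rem p l2))); last exact: gS (WS_rem pl2).
case: p Hp pl2 => r x Hp pl2 /=.
apply: eq_wsum => //; apply: IH.
by rewrite -(perm_cons (r, x)) (perm_trans Hp) // perm_to_rem.
Qed.

Definition col (l : seq (S * Exp)) (x : Exp) : S := \sum_(p <- l | p.2 == x) p.1.

Lemma col_cons r x l y : col ((r, x) :: l) y = if x == y then r + col l y else col l y.
Proof. by rewrite /col big_cons. Qed.

Lemma col_nomem l y : y \notin map snd l -> col l y = 0.
Proof.
move=> H; rewrite /col big_hasC //; apply: contra H => /hasP [p pl /eqP <-].
exact: map_f.
Qed.

Lemma zdrop_list (w : Exp -> S) (s : seq Exp) :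
  WS [seq (w x, x) | x <- s] === WS [seq (w x, x) | x <- s & w x != 0].
Proof.
elim: s => //= x s IH; case: eqVneq => [E|ne] /=.
  by rewrite E; apply: (gT _ (Zdrop _ _)).
by apply: eq_wsum.
Qed.

Lemma group (l : seq (S * Exp)) : WS l === WS [seq (col l y, y) | y <- undup (map snd l)].
Proof.
elim: l => [|[r x] l IH] //=.
apply: (gT (EWsum x r 1 (WS [seq (col l y, y) | y <- undup (map snd l)]))).
  by apply: eq_wsum.
set s := undup (map snd l).
have us : uniq s by apply: undup_uniq.
case: ifPn => Hx.
  have xs : x \in s by rewrite mem_undup.
  have P1 := perm_map (fun y => (col l y, y)) (perm_to_rem xs).
  apply: (gT (EWsum x r 1 (WS [seq (col l y, y) | y <- x :: rem x s]))).
    by apply: eq_wsum => //; apply: WS_perm.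
  rewrite /=.
  apply: (gT _ (wmerge _ _ _ _)).
  have P2 := perm_map (fun y => (col ((r, x) :: l) y, y)) (perm_to_rem xs).
  apply: gS; apply: (gT _ (WS_perm P2)) => /=.
  rewrite col_cons eqxx.
  have -> : [seq (col ((r, x) :: l) y, y) | y <- rem x s] = [seq (col l y, y) | y <- rem x s].
    apply/eq_in_map => y; rewrite (mem_rem_uniq _ us) => /andP [ne _].
    by rewrite col_cons eq_sym (negbTE ne).
  by [].
rewrite /= col_cons eqxx col_nomem // addr0.
have -> : [seq (col ((r, x) :: l) y, y) | y <- s] = [seq (col l y, y) | y <- s].
  apply/eq_in_map => y ys; rewrite col_cons; case: eqVneq => // E.
  by move: ys Hx; rewrite -E mem_undup => ->.
by [].
Qed.

Lemma col_mem l y : col l y != 0 -> y \in map snd l.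
Proof. by apply: contraR => /col_nomem ->. Qed.

Definition nfl (l : seq (S * Exp)) := [seq y <- undup (map snd l) | col l y != 0].

Lemma nf (l : seq (S * Exp)) : WS l === WS [seq (col l y, y) | y <- nfl l].
Proof. apply: (gT _ (group l)); exact: zdrop_list. Qed.

Lemma collect (l1 l2 : seq (S * Exp)) :
  (forall x, col l1 x = col l2 x) -> WS l1 === WS l2.
Proof.
move=> H.
apply: (gT _ (nf l1)); apply: gS; apply: (gT _ (nf l2)); apply: gS.
have Pm : perm_eq (nfl l1) (nfl l2).
  apply: uniq_perm; rewrite ?filter_uniq ?undup_uniq // => y.
  rewrite !mem_filter !mem_undup H.
  case E: (col l2 y != 0) => //=.
  have E1 := E; rewrite -H in E1.
  by rewrite (col_mem E) (col_mem E1).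
have E : forall s, [seq (col l1 y, y) | y <- s] = [seq (col l2 y, y) | y <- s].
  by elim=> //= y s ->; rewrite H.
rewrite E.
exact: WS_perm (perm_map _ Pm).
Qed.

Local Notation Der := (Deriv T Act Out S).
Local Notation acc := (Acc T Act Out S).
Local Notation meas := (meas T Act Out S).

Definition Wl (m : meas) : seq (S * Exp) := [seq (p.2, expd p.1) | p <- m].

Lemma Wl_scale r m : Wl (mscale r m) = scale r (Wl m).
Proof. by elim: m => //= p m ->. Qed.

Lemma Wl_cat m1 m2 : Wl (m1 ++ m2) = Wl m1 ++ Wl m2.
Proof. exact: map_cat. Qed.

Lemma col_Wl m x : col (Wl m) x = \sum_(p <- m | expd p.1 == x) p.2.
Proof. by rewrite /col big_map. Qed.

Lemma ctx_wsum d (x x' y y' : Exp) r s :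
  ESeq (tst d) x === ESeq (tst d) x' -> ESeq (tst d) y === ESeq (tst d) y' ->
  ESeq (tst d) (EWsum x r s y) === ESeq (tst d) (EWsum x' r s y').
Proof.
move=> H1 H2.
apply: (gT _ (ax_D3 _ _ _ _ _ _)); apply: gS; apply: (gT _ (ax_D3 _ _ _ _ _ _)); apply: gS.
by apply: eq_seq => //; apply: eq_wsum.
Qed.

Lemma SeqAux (d : BExp T) (e2 : Exp) (m2 : meas)
  (H2 : ESeq (tst d) e2 === ESeq (tst d) (WS (Wl m2))) (m0 : meas) :
  ESeq (tst d) (WS [seq (q.1, ESeq q.2 e2) | q <- Wl m0]) ===
  ESeq (tst d) (WS (Wl (flatten [seq match p.1 with
                   | Acc => mscale p.2 m2
                   | DAct q e' => [:: (DAct q (ESeq e' e2), p.2)]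
                   | x => [:: (x, p.2)]
                   end | p <- m0]))).
Proof.
elim: m0 => [|[x w] m0 IH] //=.
case: x => [| |v|q e'] /=.
- rewrite Wl_cat Wl_scale.
  apply: (gT (ESeq (tst d) (EWsum (WS (Wl m2)) w 1 (WS (Wl (flatten [seq match p.1 with
                   | Acc => mscale p.2 m2
                   | DAct q e' => [:: (DAct q (ESeq e' e2), p.2)]
                   | x => [:: (x, p.2)]
                   end | p <- m0])))))).
    apply: ctx_wsum => //.
    by apply: (gT (ESeq (tst d) e2)) => //; apply: eq_seq => //; apply: ax_S1l.
  by apply: eq_seq => //; apply: WS_cons.
- by apply: ctx_wsum => //; apply: eq_seq => //; apply: ax_S3.
- by apply: ctx_wsum => //; apply: eq_seq => //; apply: ax_S6.
- by apply: ctx_wsum => //; apply: eq_seq => //; apply: ax_S2.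
Qed.

Lemma LoopAux (u : S) (L : Exp) (m0 : meas) :
  WS (scale u [seq (q.1, ESeq q.2 L) | q <- Wl [seq p <- m0 | p.1 != acc]]) ===
  WS (Wl (flatten [seq match p.1 with
                     | Acc => [::]
                     | DAct q e' => [:: (DAct q (ESeq e' L), u * p.2)]
                     | x => [:: (x, u * p.2)]
                     end | p <- m0])).
Proof.
elim: m0 => [|[x w] m0 IH] //=.
case: x => [| |v|q e'] //=.
- by apply: eq_wsum => //; apply: ax_S3.
- by apply: eq_wsum => //; apply: ax_S6.
- by apply: eq_wsum => //; apply: ax_S2.
Qed.

Lemma main (e : Exp) (a : atom T) :
  ESeq (At a) e === ESeq (At a) (WS (Wl (derivative star e a))).
Proof.
elim: e a => [p|b|e1 IH1 b e2 IH2|e1 IH1 e2 IH2|e1 IH1 b|v|e1 IH1 r s e2 IH2] a /=.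
- apply: seqL; apply: gS; apply: (gT _ (WS_one _)); apply: gS; exact: ax_S1r.
- rewrite /atom_le; case: ifP => H /=.
    apply: (gT _ (aS7 _ _)).
    apply: (gT (tst (BAnd (atom_test a) (BTrue T)))).
      by apply: aTest => a' /=; rewrite atom_testE; case: eqP => //= ->; rewrite H.
    apply: (gT _ (gS (aS7 _ _))).
    apply: seqL; apply: gS; exact: WS_one.
  apply: (gT _ (aS7 _ _)).
  apply: (gT (tst (BAnd (atom_test a) (BFalse T)))).
    by apply: aTest => a' /=; rewrite atom_testE; case: eqP => //= ->; rewrite H.
  apply: (gT _ (gS (aS7 _ _))).
  apply: seqL; apply: gS; exact: WS_one.
- rewrite /atom_le; case: ifP => H.
    apply: (gT (ESeq (At a) e1)); last exact: IH1.
    by apply: guard_left => a'; rewrite atom_testE => /eqP ->.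
  apply: (gT (ESeq (At a) e2)); last exact: IH2.
  by apply: guard_right => a'; rewrite atom_testE => /eqP ->; rewrite H.
- apply: (gT (ESeq (ESeq (At a) e1) e2)); first exact: gS (ax_S2 _ _ _ _).
  apply: (gT (ESeq (ESeq (At a) (WS (Wl (derivative star e1 a)))) e2)).
    by apply: eq_seq.
  apply: (gT _ (ax_S2 _ _ _ _)).
  apply: (gT (ESeq (At a) (WS [seq (q.1, ESeq q.2 e2) | q <- Wl (derivative star e1 a)]))).
    by apply: seqL; apply: WS_seq.
  exact: SeqAux (IH2 a) _.
- rewrite /atom_le /=; case: ifP => H.
    apply: (gT (ESeq (At a) (EGuard (ESeq e1 (ELoop e1 b)) b one))).
      by apply: seqL; apply: ax_L1.
    apply: (gT (ESeq (At a) one)).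
      by apply: guard_right => a'; rewrite atom_testE => /eqP ->.
    apply: seqL; apply: gS; exact: WS_one.
  have Hb : beval b a by move/negbFE: H.
  set m := derivative star e1 a.
  set sA := mval m acc.
  set lf := Wl [seq p <- m | p.1 != acc].
  have StepA : WS (Wl m) === EWsum (WS lf) 1 sA one.
    apply: gS.
    apply: (gT (EWsum (WS lf) 1 sA (WS [:: (1, one)]))).
      by apply: eq_wsum => //; apply: gS; apply: WS_one.
    apply: (gT _ (WS_wsum _ _ _ _)); rewrite scale1 /= mulr1.
    apply: collect => x.
    rewrite col_Wl /col big_cat /= big_cons big_nil /lf big_map big_filter_cond.
    rewrite /= addr0 [RHS](bigID (fun p => p.1 == acc)) /= addrC.
    congr (_ + _).
    2: by apply: eq_bigl => p; rewrite andbC.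
    case: eqVneq => [<-|ne].
      rewrite /sA /mval; apply: eq_bigl => -[d w] /=.
      by case: d => [| |?|? ?] /=; rewrite ?andbF ?eqxx.
    rewrite big_pred0 // => -[d w] /=; case: d => [| |?|? ?] /=; rewrite ?andbF // eqxx andbT; exact: negbTE ne.
  have StepB : e1 === EGuard (EWsum (WS lf) 1 sA one) (atom_test a) e1.
    apply: gS; apply: (gT (EGuard e1 (atom_test a) e1)); last exact: ax_G1.
    apply: left_branch.
    apply: (gT (ESeq (At a) (WS (Wl m)))); last exact: gS (IH1 a).
    by apply: seqL; apply: gS.
  have L2 := rule_L2 b StepB; rewrite mulr1 in L2.
  apply: (gT _ L2).
  apply: (gT (ESeq (At a) (ESeq (od (star sA)) (ESeq (WS lf) (ELoop e1 b))))).
    by apply: guard_left => a'; rewrite atom_testE => /eqP ->.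
  apply: seqL.
  apply: (gT (ESeq (od (star sA)) (WS [seq (q.1, ESeq q.2 (ELoop e1 b)) | q <- lf]))).
    by apply: eq_seq => //; apply: WS_seq.
  apply: (gT _ (od_WS _ _)).
  exact: (LoopAux (star sA) (ELoop e1 b) m).
- apply: seqL; apply: gS; exact: WS_one.
- apply: (gT (ESeq (At a) (EWsum (WS (Wl (derivative star e1 a))) r s (WS (Wl (derivative star e2 a)))))).
    by apply: ctx_wsum.
  apply: seqL; rewrite Wl_cat !Wl_scale; exact: WS_wsum.
Qed.

Definition unexpd (x : Exp) : option Der :=
  match x with
  | ETest BTrue => Some acc
  | ETest BFalse => Some (@Rej T Act Out S)
  | ERet v => Some (@DOut T Act Out S v)
  | ESeq (EAct p) f => Some (DAct p f)
  | _ => None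
  end.

Lemma unexpdK (d : Der) : unexpd (expd d) = Some d.
Proof. by case: d. Qed.

Lemma unexpd_some (x : Exp) d : unexpd x = Some d -> x = expd d.
Proof.
case: x => [p|b|e1 b e2|e1 e2|e1 b|v|e1 r s e2] //=.
- by case: b => // [] [<-].
- by case: e1 => // p [<-].
- by move=> [<-].
Qed.

Lemma expd_inj : injective (@expd T Act Out S).
Proof. exact: pcan_inj unexpdK. Qed.

Lemma big_seq_pred1 (s : seq Der) d0 (F : Der -> S) :
  uniq s -> \sum_(d <- s | d == d0) F d = if d0 \in s then F d0 else 0.
Proof.
elim: s => [|y s IH] /=; first by rewrite big_nil.
move=> /andP [ys us]; rewrite big_cons in_cons IH //.
case: (eqVneq y d0) => [<-|ne] /=; last by [].
by rewrite (negbTE ys) addr0.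
Qed.

Lemma final_thm (e : Exp)
  (ats : seq (atom T)) (Hats_all : forall a : atom T, a \in ats)
  (sup : atom T -> seq Der)
  (Hsup_uniq : forall a, uniq (sup a))
  (Hsup : forall a d, (d \in sup a) = supp (derivative star e a) d) :
  gequiv star e
    (GS ats (fun a => WS [seq (mval (derivative star e a) d, expd d) | d <- sup a])).
Proof.
apply: pointwise => a.
apply: (gT _ (main e a)).
apply: gS; apply: (gT _ (GS_at _ (Hats_all a))); apply: seqL; apply: gS.
apply: collect => x.
rewrite col_Wl /col big_map /=.
case E: (unexpd x) => [d0|].
  rewrite (unexpd_some E).
  rewrite (eq_bigl (fun p => p.1 == d0)); last by move=> p; rewrite (inj_eq expd_inj).
  rewrite (eq_bigl (fun d => d == d0)); last by move=> d; rewrite (inj_eq expd_inj).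
  rewrite big_seq_pred1 //; case: ifPn => // /negbTE; rewrite Hsup /supp.
  by move/negbFE/eqP.
rewrite !big_pred0 // => p; apply/negP => /eqP Ex; move: E; rewrite -Ex unexpdK //.
Qed.

End Proofs.


Theorem mainTheorem8 (T : finType) (Act Out : eqType) (S : pzSemiRingType)
  (star : S -> S)
  (Hpositive : forall x y : S, x + y = 0 -> x = 0 /\ y = 0)
  (Hrefinement : forall x y z w : S, x + y = z + w ->
     exists s t u v : S, [/\ s + t = x, s + u = z, u + v = y & t + v = w])
  (Hconway1 : forall a b : S, star (a + b) = star a * star (b * star a))
  (Hconway2 : forall a b : S, star (a * b) = 1 + a * star (b * a) * b)
  (e : Exp T Act Out S)
  (ats : seq (atom T)) (Hats_uniq : uniq ats) (Hats_all : forall a : atom T, a \in ats)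
  (sup : atom T -> seq (Deriv T Act Out S))
  (Hsup_uniq : forall a, uniq (sup a))
  (Hsup : forall a d, (d \in sup a) = supp (derivative star e a) d) :
  gequiv star e
    (GS ats (fun a => WS [seq (mval (derivative star e a) d, expd d) | d <- sup a])).
Proof. exact: (final_thm Hats_all Hsup_uniq Hsup). Qed.
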